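(* Let $r>0$ and $p,q\in\mathbb{R}$, and for integers $n\ge2$ let $$S_{r,p,q}^{(n)}=\sum_{k=1}^{n-1}(n^r-k^r)^p\,k^q.$$ Then, as $n\to\infty$, $S_{r,p,q}^{(n)}$ is of the same order (bounded above and below by positive constant multiples) as $$\begin{cases} n^{rp+q+1}, & \min\{p,q\}>-1,\\ n^{rp+q+1}(1+\ln n), & \min\{p,q\}=-1,\\ n^{\max\{rp,\,(r-1)p+q\}}, & \min\{p,q\}<-1.\end{cases}$$ *)

(* Defs.v *)
From Stdlib Require Import Reals Lra Lia.
Open Scope R_scope.

(* The summand (n^r - k^r)^p * k^q, with real exponents.
   For 1 <= k <= n-1 both bases are positive, so Rpower is the usual power. *)
Definition term (r p q : R) (n k : nat) : R :=
  Rpower (Rpower (INR n) r - Rpower (INR k) r) p * Rpower (INR k) q.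

(* S_{r,p,q}^{(n)} = sum_{k=1}^{n-1} term k  (meaningful for n >= 2):
   sum_f_R0 f m = f 0 + ... + f m, so indices j = 0..n-2 give k = j+1 = 1..n-1. *)
Definition S (r p q : R) (n : nat) : R :=
  sum_f_R0 (fun j => term r p q n (S j)) (n - 2).

Definition order_fn (r p q : R) (n : nat) : R :=
  if Rlt_dec (-1) (Rmin p q) then Rpower (INR n) (r * p + q + 1)
  else if Req_EM_T (Rmin p q) (-1) then
    Rpower (INR n) (r * p + q + 1) * (1 + ln (INR n))
  else Rpower (INR n) (Rmax (r * p) ((r - 1) * p + q)).

(* Main.v *)
Require Import Defs.
From Stdlib Require Import Reals Lra Lia.
Open Scope R_scope.

Lemma exp_le' x y : x <= y -> exp x <= exp y.
Proof. intros [H|H]; [left; apply exp_increasing; exact H| subst; lra]. Qed.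

Lemma ln_le' x y : 0 < x -> x <= y -> ln x <= ln y.
Proof. intros Hx [H|H]; [left; apply ln_increasing; lra| subst; lra]. Qed.

Lemma ln_le_sub1 x : 0 < x -> ln x <= x - 1.
Proof. intros Hx. pose proof (exp_ineq1_le (ln x)). rewrite exp_ln in H; lra. Qed.

Lemma Rpower_pos' x y : 0 < Rpower x y.
Proof. unfold Rpower; apply exp_pos. Qed.

Lemma Rpower_ln x y : ln (Rpower x y) = y * ln x.
Proof. unfold Rpower; apply ln_exp. Qed.

Lemma Rpower_one y : Rpower 1 y = 1.
Proof. unfold Rpower. rewrite ln_1, Rmult_0_r. apply exp_0. Qed.

Lemma bern1 s v : 0 <= s <= 1 -> 0 < v -> Rpower v s <= 1 + s * (v - 1).
Proof.
  intros Hs Hv. set (w := s * v + 1 - s).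
  assert (Hw : 0 < w) by (unfold w; nra).
  assert (H1 : ln (v / w) <= v / w - 1) by (apply ln_le_sub1; apply Rdiv_lt_0_compat; lra).
  assert (H2 : ln (/ w) <= / w - 1) by (apply ln_le_sub1; apply Rinv_0_lt_compat; lra).
  unfold Rdiv in H1. rewrite ln_mult in H1 by (try apply Rinv_0_lt_compat; lra).
  rewrite ln_Rinv in H1, H2 by lra.
  assert (H3 : s * (ln v + - ln w) + (1 - s) * (- ln w) <= s * (v * / w - 1) + (1 - s) * (/ w - 1)).
  { apply Rplus_le_compat; apply Rmult_le_compat_l; lra. }
  assert (H4 : s * (v * / w - 1) + (1 - s) * (/ w - 1) = 0).
  { field_simplify_eq; [unfold w; ring | lra]. }
  assert (H5 : s * ln v <= ln w) by lra.
  unfold Rpower. replace (1 + s * (v - 1)) with w by (unfold w; ring).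
  rewrite <- (exp_ln w) by lra. apply exp_le'. lra.
Qed.

Lemma bern2a s v : 1 <= s -> 0 < v -> 1 + s * (v - 1) <= Rpower v s.
Proof.
  intros Hs Hv.
  assert (H := bern1 (/ s) (Rpower v s)).
  rewrite Rpower_mult in H. rewrite Rinv_r, Rpower_1 in H by lra.
  assert (0 < / s <= 1).
  { split. apply Rinv_0_lt_compat; lra. rewrite <- Rinv_1. apply Rinv_le_contravar; lra. }
  specialize (H ltac:(lra) (Rpower_pos' _ _)).
  apply Rmult_le_compat_l with (r := s) in H; [|lra].
  rewrite Rmult_plus_distr_l, <- Rmult_assoc, Rinv_r in H by lra. lra.
Qed.

Lemma bern2b s v : s <= 0 -> 0 < v -> 1 + s * (v - 1) <= Rpower v s.
Proof.
  intros Hs Hv. unfold Rpower. eapply Rle_trans; [|apply exp_ineq1_le].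
  pose proof (ln_le_sub1 v Hv). nra.
Qed.

Lemma Rpower_le_base x y p : 0 < x -> x <= y -> 0 <= p -> Rpower x p <= Rpower y p.
Proof. intros. unfold Rpower. apply exp_le'. apply Rmult_le_compat_l; auto. apply ln_le'; lra. Qed.

Lemma Rpower_le_base_neg x y p : 0 < x -> x <= y -> p <= 0 -> Rpower y p <= Rpower x p.
Proof. intros. unfold Rpower. apply exp_le'. pose proof (ln_le' x y H H0). nra. Qed.

Lemma powbound a x b p : 0 < a -> a <= x -> x <= b ->
  Rmin (Rpower a p) (Rpower b p) <= Rpower x p <= Rmax (Rpower a p) (Rpower b p).
Proof.
  intros Ha Hax Hxb. destruct (Rle_or_lt 0 p) as [Hp|Hp].
  - split.
    + eapply Rle_trans; [apply Rmin_l|]. apply Rpower_le_base; lra.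
    + eapply Rle_trans; [|apply Rmax_r]. apply Rpower_le_base; lra.
  - split.
    + eapply Rle_trans; [apply Rmin_r|]. apply Rpower_le_base_neg; lra.
    + eapply Rle_trans; [|apply Rmax_l]. apply Rpower_le_base_neg; lra.
Qed.

Lemma Rpower_mul x y p : 0 < x -> 0 < y -> Rpower (x * y) p = Rpower x p * Rpower y p.
Proof. intros. rewrite Rpower_mult_distr; auto. Qed.

Lemma Rpower_m1 x : 0 < x -> Rpower x (-1) = / x.
Proof. intros. replace (-1) with (- (1)) by ring. rewrite Rpower_Ropp, Rpower_1; auto. Qed.

Lemma Rpower_sub1 x s : 0 < x -> Rpower x (s - 1) = Rpower x s / x.
Proof. intros. unfold Rminus. rewrite Rpower_plus, Rpower_m1; auto. Qed.

Lemma Rpower_add1 x s : 0 < x -> Rpower x (s + 1) = Rpower x s * x.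
Proof. intros. rewrite Rpower_plus, Rpower_1; auto. Qed.

Lemma tel1 K s : 1 < K -> 0 <= s <= 1 -> Rpower (K - 1) s <= Rpower K s - s * Rpower K (s - 1).
Proof.
  intros HK Hs. set (v := (K - 1) / K).
  assert (Hv : 0 < v) by (unfold v; apply Rdiv_lt_0_compat; lra).
  replace (K - 1) with (v * K) by (unfold v; field; lra).
  rewrite Rpower_mul, Rpower_sub1 by lra.
  pose proof (bern1 s v Hs Hv). pose proof (Rpower_pos' K s).
  replace (v - 1) with (- / K) in H by (unfold v; field; lra).
  apply Rmult_le_compat_r with (r := Rpower K s) in H; [|lra].
  unfold Rdiv. nra.
Qed.

Lemma tel2 K s : 1 < K -> (1 <= s \/ s <= 0) -> Rpower K s - s * Rpower K (s - 1) <= Rpower (K - 1) s.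
Proof.
  intros HK Hs. set (v := (K - 1) / K).
  assert (Hv : 0 < v) by (unfold v; apply Rdiv_lt_0_compat; lra).
  replace (K - 1) with (v * K) by (unfold v; field; lra).
  rewrite Rpower_mul, Rpower_sub1 by lra.
  assert (H : 1 + s * (v - 1) <= Rpower v s) by (destruct Hs; [apply bern2a|apply bern2b]; auto).
  pose proof (Rpower_pos' K s).
  replace (v - 1) with (- / K) in H by (unfold v; field; lra).
  apply Rmult_le_compat_r with (r := Rpower K s) in H; [|lra].
  unfold Rdiv. nra.
Qed.

Fixpoint sumk (f : nat -> R) (m : nat) : R :=
  match m with O => 0 | Datatypes.S m' => sumk f m' + f (Datatypes.S m') end.

Lemma sumk_le f g m : (forall k, (1 <= k <= m)%nat -> f k <= g k) -> sumk f m <= sumk g m.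
Proof.
  induction m; simpl; intros H; [lra|].
  apply Rplus_le_compat; [apply IHm; intros; apply H; lia| apply H; lia].
Qed.

Lemma sumk_ext f g m : (forall k, (1 <= k <= m)%nat -> f k = g k) -> sumk f m = sumk g m.
Proof.
  induction m; simpl; intros H; [lra|].
  rewrite IHm, H; [reflexivity|lia|intros; apply H; lia].
Qed.

Lemma sumk_plus f g m : sumk (fun k => f k + g k) m = sumk f m + sumk g m.
Proof. induction m; simpl; [lra|]. rewrite IHm; ring. Qed.

Lemma sumk_scal c f m : sumk (fun k => c * f k) m = c * sumk f m.
Proof. induction m; simpl; [lra|]. rewrite IHm; ring. Qed.

Lemma sumk_nonneg f m : (forall k, (1 <= k <= m)%nat -> 0 <= f k) -> 0 <= sumk f m.
Proof.
  induction m; simpl; intros H; [lra|].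
  pose proof (H (Datatypes.S m) ltac:(lia)). pose proof (IHm ltac:(intros; apply H; lia)). lra.
Qed.

Lemma sumk_partial f m m' : (forall k, (1 <= k <= m)%nat -> 0 <= f k) -> (m' <= m)%nat ->
  sumk f m' <= sumk f m.
Proof.
  intros H Hm. induction Hm as [|mm Hm IHHm]; [lra|]. simpl.
  pose proof (H (Datatypes.S mm) ltac:(lia)). pose proof (IHHm ltac:(intros; apply H; lia)). lra.
Qed.

Lemma sumk_shift f m : sumk f (Datatypes.S m) = f 1%nat + sumk (fun k => f (Datatypes.S k)) m.
Proof. induction m; simpl in *; [ring|]. rewrite IHm. ring. Qed.

Lemma sumk_refl m : forall f, sumk (fun k => f (Datatypes.S m - k)%nat) m = sumk f m.
Proof.
  induction m; intros f; [reflexivity|].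
  rewrite sumk_shift. simpl (Datatypes.S (Datatypes.S m) - 1)%nat.
  change (sumk (fun k => f (Datatypes.S (Datatypes.S m) - Datatypes.S k)%nat) m) with (sumk (fun k => f (Datatypes.S m - k)%nat) m).
  rewrite IHm. simpl. replace (m - 0)%nat with m by lia. ring.
Qed.

Lemma sum_f_R0_sumk g m : sum_f_R0 (fun j => g (Datatypes.S j)) m = sumk g (Datatypes.S m).
Proof. induction m; simpl; [ring|]. rewrite IHm. simpl. ring. Qed.

Definition A (q : R) (m : nat) : R := sumk (fun k => Rpower (INR k) q) m.

Lemma A_S q m : A q (Datatypes.S m) = A q m + Rpower (INR m + 1) q.
Proof. unfold A; cbn [sumk]; rewrite S_INR; reflexivity. Qed.

Lemma A_1 q : A q 1 = 1.
Proof. unfold A; simpl. rewrite Rpower_one. ring. Qed.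

Lemma INR_ge1 m : (1 <= m)%nat -> 1 <= INR m.
Proof. intros. apply (le_INR 1 m) in H. simpl in H. exact H. Qed.

Ltac ind1 m IH := induction m as [|m IH]; intros Hm; [lia|];
  destruct (Nat.eq_dec m 0) as [->|Hm0]; [rewrite A_1; simpl INR | rewrite A_S, ?S_INR; specialize (IH ltac:(lia));
  pose proof (INR_ge1 m ltac:(lia))].

Lemma AU_pos q m : -1 < q <= 0 -> (1 <= m)%nat -> (q + 1) * A q m <= Rpower (INR m) (q + 1).
Proof.
  intros Hq. ind1 m IH.
  - rewrite Rpower_one. lra.
  - set (M := INR m) in *. pose proof (tel1 (M + 1) (q + 1) ltac:(lra) ltac:(lra)).
    replace (M + 1 - 1) with M in H0 by ring. replace (q + 1 - 1) with q in H0 by ring.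
    rewrite Rmult_plus_distr_l. lra.
Qed.

Lemma AU_neg q m : q < -1 -> (1 <= m)%nat -> (- (q + 1)) * A q m <= - (q + 1) + 1 - Rpower (INR m) (q + 1).
Proof.
  intros Hq. ind1 m IH.
  - rewrite Rpower_one. lra.
  - set (M := INR m) in *. pose proof (tel2 (M + 1) (q + 1) ltac:(lra) ltac:(lra)).
    replace (M + 1 - 1) with M in H0 by ring. replace (q + 1 - 1) with q in H0 by ring.
    rewrite Rmult_plus_distr_l. lra.
Qed.

Lemma AL_ge0 q m : 0 <= q -> (1 <= m)%nat -> Rpower (INR m) (q + 1) <= (q + 1) * A q m.
Proof.
  intros Hq. ind1 m IH.
  - rewrite Rpower_one. lra.
  - set (M := INR m) in *. pose proof (tel2 (M + 1) (q + 1) ltac:(lra) ltac:(lra)).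
    replace (M + 1 - 1) with M in H0 by ring. replace (q + 1 - 1) with q in H0 by ring.
    rewrite Rmult_plus_distr_l. lra.
Qed.

Lemma AU_ge0 q m : 0 <= q -> (1 <= m)%nat -> A q m <= Rpower (INR m) (q + 1).
Proof.
  intros Hq. ind1 m IH.
  - rewrite Rpower_one. lra.
  - set (M := INR m) in *. rewrite !Rpower_add1 in * by lra.
    pose proof (Rpower_le_base M (M + 1) q ltac:(lra) ltac:(lra) Hq).
    pose proof (Rpower_pos' (M+1) q). nra.
Qed.

Lemma AL_pos q m : -1 < q <= 0 -> (1 <= m)%nat -> Rpower (INR m) (q + 1) <= A q m.
Proof.
  intros Hq. ind1 m IH.
  - rewrite Rpower_one. lra.
  - set (M := INR m) in *. rewrite !Rpower_add1 in * by lra.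
    pose proof (Rpower_le_base_neg M (M + 1) q ltac:(lra) ltac:(lra) ltac:(lra)).
    pose proof (Rpower_pos' (M+1) q). nra.
Qed.

Lemma AU_m1 m : (1 <= m)%nat -> A (-1) m <= 1 + ln (INR m).
Proof.
  ind1 m IH.
  - rewrite ln_1. lra.
  - set (M := INR m) in *. rewrite Rpower_m1 by lra.
    pose proof (ln_le_sub1 (M / (M + 1)) ltac:(apply Rdiv_lt_0_compat; lra)).
    unfold Rdiv in H0. rewrite ln_mult, ln_Rinv in H0 by (try apply Rinv_0_lt_compat; lra).
    replace (M * / (M + 1) - 1) with (- / (M + 1)) in H0 by (field; lra). lra.
Qed.

Lemma AL_m1 m : (1 <= m)%nat -> ln (INR m + 1) <= A (-1) m.
Proof.
  ind1 m IH.
  - pose proof (ln_le_sub1 (1 + 1) ltac:(lra)). lra.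
  - set (M := INR m) in *. rewrite Rpower_m1 by lra.
    pose proof (ln_le_sub1 ((M + 1 + 1) / (M + 1)) ltac:(apply Rdiv_lt_0_compat; lra)).
    unfold Rdiv in H0. rewrite ln_mult, ln_Rinv in H0 by (try apply Rinv_0_lt_compat; lra).
    replace ((M + 1 + 1) * / (M + 1) - 1) with (/ (M + 1)) in H0 by (field; lra). lra.
Qed.

Lemma AL_any q m : (1 <= m)%nat -> 1 <= A q m.
Proof.
  intros Hm. rewrite <- (A_1 q). unfold A. apply sumk_partial; auto.
  intros; left; apply Rpower_pos'.
Qed.

Lemma A_nonneg q m : 0 <= A q m.
Proof. unfold A. apply sumk_nonneg. intros; left; apply Rpower_pos'. Qed.

Definition a (q X : R) : R :=
  if Rlt_dec (-1) q then Rpower X (q + 1)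
  else if Req_EM_T q (-1) then 1 + ln X else 1.

Ltac casea q := unfold a; destruct (Rlt_dec (-1) q); [|destruct (Req_EM_T q (-1))]; try lra.

Lemma ln_ge0 X : 1 <= X -> 0 <= ln X.
Proof. intros. rewrite <- ln_1. apply ln_le'; lra. Qed.

Lemma a_pos q X : 1 <= X -> 0 < a q X.
Proof. intros. pose proof (ln_ge0 X H). casea q; try apply Rpower_pos'; lra. Qed.

Lemma AUa q : exists C, 0 < C /\ forall m X, (1 <= m)%nat -> INR m <= X -> A q m <= C * a q X.
Proof.
  destruct (Rlt_dec (-1) q) as [H1|H1].
  - destruct (Rle_dec 0 q) as [H2|H2].
    + exists 1. split; [lra|]. intros m X Hm HX. pose proof (INR_ge1 m Hm).
      casea q. pose proof (AU_ge0 q m H2 Hm).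
      pose proof (Rpower_le_base (INR m) X (q+1) ltac:(lra) HX ltac:(lra)). lra.
    + exists (/ (q + 1)). split; [apply Rinv_0_lt_compat; lra|]. intros m X Hm HX.
      pose proof (INR_ge1 m Hm).
      casea q. pose proof (AU_pos q m ltac:(lra) Hm).
      pose proof (Rpower_le_base (INR m) X (q+1) ltac:(lra) HX ltac:(lra)).
      apply Rmult_le_reg_l with (q + 1); [lra|].
      rewrite <- Rmult_assoc, Rinv_r by lra. lra.
  - destruct (Req_EM_T q (-1)) as [H2|H2].
    + subst. exists 1. split; [lra|]. intros m X Hm HX. pose proof (INR_ge1 m Hm).
      casea (-1). pose proof (AU_m1 m Hm). pose proof (ln_le' (INR m) X ltac:(lra) HX). lra.
    + exists (1 + / (- (q + 1))). split.
      { pose proof (Rinv_0_lt_compat (- (q+1)) ltac:(lra)). lra. }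
      intros m X Hm HX. casea q. pose proof (AU_neg q m ltac:(lra) Hm).
      pose proof (Rpower_pos' (INR m) (q + 1)).
      apply Rmult_le_reg_l with (- (q + 1)); [lra|].
      rewrite Rmult_1_r, Rmult_plus_distr_l, Rinv_r by lra. lra.
Qed.

Lemma ALa q : exists c, 0 < c /\ forall m X, (1 <= m)%nat -> 1 <= X -> X <= 4 * INR m ->
  c * a q X <= A q m.
Proof.
  destruct (Rlt_dec (-1) q) as [H1|H1].
  - destruct (Rle_dec 0 q) as [H2|H2].
    + exists (Rpower (/ 4) (q + 1) / (q + 1)). split.
      { apply Rdiv_lt_0_compat; [apply Rpower_pos'|lra]. }
      intros m X Hm HX HXm. pose proof (INR_ge1 m Hm).
      casea q. pose proof (AL_ge0 q m H2 Hm).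
      pose proof (Rpower_le_base (/ 4 * X) (INR m) (q+1) ltac:(lra) ltac:(lra) ltac:(lra)).
      rewrite Rpower_mul in H3 by lra.
      apply Rmult_le_reg_l with (q + 1); [lra|].
      unfold Rdiv. replace ((q + 1) * (Rpower (/ 4) (q + 1) * / (q + 1) * Rpower X (q + 1)))
        with (Rpower (/ 4) (q + 1) * Rpower X (q + 1)) by (field; lra). lra.
    + exists (Rpower (/ 4) (q + 1)). split; [apply Rpower_pos'|].
      intros m X Hm HX HXm. pose proof (INR_ge1 m Hm).
      casea q. pose proof (AL_pos q m ltac:(lra) Hm).
      pose proof (Rpower_le_base (/ 4 * X) (INR m) (q+1) ltac:(lra) ltac:(lra) ltac:(lra)).
      rewrite Rpower_mul in H3 by lra. lra.
  - destruct (Req_EM_T q (-1)) as [H2|H2].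
    + subst. exists (/ 7). split; [lra|]. intros m X Hm HX HXm. pose proof (INR_ge1 m Hm).
      casea (-1). pose proof (AL_m1 m Hm).
      pose proof (ln_le' X (4 * (INR m + 1)) ltac:(lra) ltac:(lra)) as Hl.
      rewrite ln_mult in Hl by lra.
      replace 4 with (2 * 2) in Hl by ring. rewrite ln_mult in Hl by lra.
      pose proof ln_lt_2. pose proof (ln_le_sub1 2 ltac:(lra)).
      pose proof (ln_le' 2 (INR m + 1) ltac:(lra) ltac:(lra)). lra.
    + exists 1. split; [lra|]. intros m X Hm HX HXm. casea q. pose proof (AL_any q m Hm). lra.
Qed.

Definition T (p q : R) (n : nat) : R :=
  sumk (fun k => Rpower (INR (n - k)) p * Rpower (INR k) q) (n - 1).

Lemma T_sym p q n : T p q n = T q p n.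
Proof.
  unfold T. destruct n as [|n']; [reflexivity|].
  replace (Datatypes.S n' - 1)%nat with n' by lia.
  pose proof (sumk_refl n' (fun j => Rpower (INR (Datatypes.S n' - j)) q * Rpower (INR j) p)) as E.
  cbv beta in E. rewrite <- E. apply sumk_ext. intros k Hk.
  replace (Datatypes.S n' - (Datatypes.S n' - k))%nat with k by lia. ring.
Qed.

Lemma PB X Y p : 0 < X -> X / 2 <= Y -> Y <= X ->
  Rmin (Rpower (/ 2) p) 1 * Rpower X p <= Rpower Y p <= Rmax (Rpower (/ 2) p) 1 * Rpower X p.
Proof.
  intros HX H1 H2. pose proof (powbound (/ 2 * X) Y X p ltac:(lra) ltac:(lra) H2) as [L U].
  rewrite Rpower_mul in L, U by lra. pose proof (Rpower_pos' X p).
  split.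
  - eapply Rle_trans; [|exact L]. apply Rmin_glb.
    + apply Rmult_le_compat_r; [lra| apply Rmin_l].
    + rewrite <- (Rmult_1_l (Rpower X p)) at 2. apply Rmult_le_compat_r; [lra| apply Rmin_r].
  - eapply Rle_trans; [exact U|]. apply Rmax_lub.
    + apply Rmult_le_compat_r; [lra| apply Rmax_l].
    + rewrite <- (Rmult_1_l (Rpower X p)) at 1. apply Rmult_le_compat_r; [lra| apply Rmax_r].
Qed.

Lemma nat2R k n : (2 * k <= n)%nat -> 2 * INR k <= INR n.
Proof. intros H. apply le_INR in H. rewrite mult_INR in H. simpl in H. lra. Qed.

Lemma TU p q : exists C, 0 < C /\ forall n, (2 <= n)%nat ->
  T p q n <= C * (Rpower (INR n) p * A q (n - 1) + Rpower (INR n) q * A p (n - 1)).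
Proof.
  set (Cp := Rmax (Rpower (/ 2) p) 1). set (Cq := Rmax (Rpower (/ 2) q) 1).
  exists (Rmax Cp Cq). split.
  { eapply Rlt_le_trans; [|apply Rmax_l]. unfold Cp. eapply Rlt_le_trans; [|apply Rmax_r]. lra. }
  intros n Hn. set (C := Rmax Cp Cq). set (X := INR n).
  assert (HC1 : Cp <= C) by apply Rmax_l. assert (HC2 : Cq <= C) by apply Rmax_r.
  unfold T. eapply Rle_trans.
  - apply sumk_le with (g := fun k => C * (Rpower X p * Rpower (INR k) q) + C * (Rpower X q * Rpower (INR (n - k)) p)).
    intros k Hk. rewrite minus_INR by lia. fold X.
    pose proof (INR_ge1 k ltac:(lia)). assert (INR k < X) by (apply lt_INR; lia).
    pose proof (Rpower_pos' X p). pose proof (Rpower_pos' X q).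
    pose proof (Rpower_pos' (INR k) q). pose proof (Rpower_pos' (X - INR k) p).
    destruct (Nat.le_gt_cases (2 * k) n) as [Hk2|Hk2].
    + apply nat2R in Hk2. fold X in Hk2.
      destruct (PB X (X - INR k) p ltac:(lra) ltac:(lra) ltac:(lra)) as [_ U]. fold Cp in U.
      assert (H5 : Rpower (X - INR k) p <= C * Rpower X p) by nra.
      assert (0 <= C * (Rpower X q * Rpower (X - INR k) p)) by (apply Rmult_le_pos; nra).
      apply Rmult_le_compat_r with (r := Rpower (INR k) q) in H5; lra.
    + assert (Hk3 : (n <= 2 * k)%nat) by lia. apply le_INR in Hk3. rewrite mult_INR in Hk3.
      simpl (INR 2) in Hk3. fold X in Hk3.
      destruct (PB X (INR k) q ltac:(lra) ltac:(lra) ltac:(lra)) as [_ U]. fold Cq in U.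
      assert (H5 : Rpower (INR k) q <= C * Rpower X q) by nra.
      assert (0 <= C * (Rpower X p * Rpower (INR k) q)) by (apply Rmult_le_pos; nra).
      apply Rmult_le_compat_l with (r := Rpower (X - INR k) p) in H5; lra.
  - rewrite sumk_plus, !sumk_scal. unfold A.
    destruct n as [|n']; [lia|]. replace (Datatypes.S n' - 1)%nat with n' by lia.
    pose proof (sumk_refl n' (fun j => Rpower (INR j) p)) as E. cbv beta in E. rewrite E. lra.
Qed.

Lemma TL p q : exists c, 0 < c /\ forall n, (2 <= n)%nat ->
  c * Rpower (INR n) p * A q (n / 2) <= T p q n.
Proof.
  exists (Rmin (Rpower (/ 2) p) 1). split.
  { apply Rmin_glb_lt; [apply Rpower_pos'|lra]. }
  intros n Hn. set (c := Rmin (Rpower (/ 2) p) 1). set (X := INR n).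
  pose proof (Nat.div_mod_eq n 2). pose proof (Nat.mod_upper_bound n 2 ltac:(lia)).
  unfold T. eapply Rle_trans; [|apply sumk_partial with (m' := (n / 2)%nat)].
  - unfold A. rewrite <- sumk_scal. apply sumk_le. intros k Hk.
    rewrite minus_INR by lia. fold X.
    assert (Hk2 : (2 * k <= n)%nat) by lia. apply nat2R in Hk2. fold X in Hk2.
    pose proof (INR_ge1 k ltac:(lia)).
    destruct (PB X (X - INR k) p ltac:(lra) ltac:(lra) ltac:(lra)) as [L _]. fold c in L.
    pose proof (Rpower_pos' (INR k) q). nra.
  - intros k Hk. left. apply Rmult_lt_0_compat; apply Rpower_pos'.
  - lia.
Qed.

Definition G (p q X : R) : R :=
  if Rlt_dec (-1) (Rmin p q) then Rpower X (p + q + 1)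
  else if Req_EM_T (Rmin p q) (-1) then Rpower X (p + q + 1) * (1 + ln X)
  else Rpower X (Rmax p q).

Lemma G_sym p q X : G p q X = G q p X.
Proof. unfold G. rewrite Rmin_comm, Rmax_comm, (Rplus_comm p q). reflexivity. Qed.

Lemma G_eq p q X : q <= p -> 0 < X -> G p q X = Rpower X p * a q X.
Proof.
  intros Hqp HX. unfold G. rewrite Rmin_right, Rmax_left by lra.
  casea q.
  - rewrite <- Rpower_plus. f_equal. ring.
  - subst. f_equal. f_equal. ring.
Qed.

Lemma hcmp p q : q <= p -> exists C, 0 < C /\ forall X, 1 <= X ->
  Rpower X q * a p X <= C * (Rpower X p * a q X).
Proof.
  intros Hqp.
  destruct (Rlt_dec (-1) p) as [H1|H1].
  - exists 1. split; [lra|]. intros X HX. pose proof (ln_ge0 X HX).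
    pose proof (Rpower_pos' X p). pose proof (Rpower_pos' X q).
    unfold a at 1. destruct (Rlt_dec (-1) p); [|lra].
    rewrite <- Rpower_plus. casea q.
    + rewrite <- Rpower_plus, Rmult_1_l. right. f_equal. ring.
    + subst. replace (-1 + (p + 1)) with p by ring. nra.
    + rewrite Rmult_1_r, Rmult_1_l. apply Rle_Rpower; lra.
  - destruct (Req_EM_T p (-1)) as [H2|H2].
    + subst. destruct (Req_EM_T q (-1)) as [H3|H3].
      * subst. exists 1. split; [lra|]. intros X HX. lra.
      * set (e := - (q + 1)). assert (He : 0 < e) by (unfold e; lra).
        exists (1 + / e). split; [pose proof (Rinv_0_lt_compat e He); lra|].
        intros X HX. unfold a. destruct (Rlt_dec (-1) (-1)); [lra|].
        destruct (Req_EM_T (-1) (-1)); [|lra].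
        destruct (Rlt_dec (-1) q); [lra|]. destruct (Req_EM_T q (-1)); [lra|].
        rewrite Rmult_1_r.
        (* X^q (1 + ln X) <= (1 + 1/e) X^-1 *)
        replace q with (-1 + - e) by (unfold e; ring).
        rewrite Rpower_plus. pose proof (Rpower_pos' X (-1)).
        assert (Hb : Rpower X (- e) * (1 + ln X) <= 1 + / e).
        { rewrite Rpower_Ropp. pose proof (Rpower_pos' X e).
          assert (Rpower X e >= 1).
          { rewrite <- (Rpower_O X) by lra. apply Rle_ge, Rle_Rpower; lra. }
          pose proof (ln_le_sub1 (Rpower X e) ltac:(lra)). rewrite Rpower_ln in H4.
          assert (ln X <= Rpower X e / e).
          { apply Rmult_le_reg_l with e; [lra|]. unfold Rdiv.
            replace (e * (Rpower X e * / e)) with (Rpower X e) by (field; lra). lra. }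
          rewrite Rmult_plus_distr_l, Rmult_1_r.
          apply Rplus_le_compat.
          - rewrite <- Rinv_1. apply Rinv_le_contravar; lra.
          - eapply Rle_trans. apply Rmult_le_compat_l; [left; apply Rinv_0_lt_compat; lra| exact H5].
            right. field. lra. }
        nra.
    + exists 1. split; [lra|]. intros X HX. unfold a.
      destruct (Rlt_dec (-1) p); [lra|]. destruct (Req_EM_T p (-1)); [lra|].
      destruct (Rlt_dec (-1) q); [lra|]. destruct (Req_EM_T q (-1)); [lra|].
      rewrite !Rmult_1_r, Rmult_1_l. apply Rle_Rpower; lra.
Qed.

Lemma K2le p q : q <= p -> exists c C, 0 < c /\ 0 < C /\ forall n, (2 <= n)%nat ->
  c * G p q (INR n) <= T p q n <= C * G p q (INR n).
Proof.
  intros Hqp.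
  destruct (TU p q) as [Cu [HCu HTU]]. destruct (TL p q) as [cl [Hcl HTL]].
  destruct (AUa q) as [Cq [HCq HAq]]. destruct (AUa p) as [Cp [HCp HAp]].
  destruct (ALa q) as [ca [Hca HAL]]. destruct (hcmp p q Hqp) as [Ch [HCh Hh]].
  exists (cl * ca), (Cu * (Cq + Cp * Ch)). split; [apply Rmult_lt_0_compat; lra|]. split; [apply Rmult_lt_0_compat; [lra|]; pose proof (Rmult_lt_0_compat Cp Ch HCp HCh); lra|].
  intros n Hn. set (X := INR n).
  assert (HX : 2 <= X) by (unfold X; apply (le_INR 2 n) in Hn; simpl in Hn; lra).
  rewrite G_eq by lra.
  pose proof (a_pos q X ltac:(lra)). pose proof (a_pos p X ltac:(lra)).
  pose proof (Rpower_pos' X p). pose proof (Rpower_pos' X q).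
  pose proof (Nat.div_mod_eq n 2). pose proof (Nat.mod_upper_bound n 2 ltac:(lia)).
  split.
  - specialize (HTL n Hn). fold X in HTL.
    assert (Hm : (1 <= n / 2)%nat) by lia.
    assert (H4m : X <= 4 * INR (n / 2)).
    { unfold X. assert (Hnn : (n <= 4 * (n / 2))%nat) by lia. apply le_INR in Hnn.
      rewrite mult_INR in Hnn. simpl (INR 4) in Hnn. lra. }
    specialize (HAL (n / 2)%nat X Hm ltac:(lra) H4m).
    assert (cl * Rpower X p * (ca * a q X) <= cl * Rpower X p * A q (n / 2)).
    { apply Rmult_le_compat_l; [nra|exact HAL]. }
    nra.
  - specialize (HTU n Hn). fold X in HTU.
    assert (Hm : (1 <= n - 1)%nat) by lia.
    assert (HmX : INR (n - 1) <= X) by (unfold X; apply le_INR; lia).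
    specialize (HAq _ _ Hm HmX). specialize (HAp _ _ Hm HmX). specialize (Hh X ltac:(lra)).
    pose proof (A_nonneg q (n-1)). pose proof (A_nonneg p (n-1)).
    assert (E1 : Rpower X p * A q (n - 1) <= Rpower X p * (Cq * a q X)) by (apply Rmult_le_compat_l; lra).
    assert (E2 : Rpower X q * A p (n - 1) <= Cp * (Rpower X q * a p X)).
    { replace (Cp * (Rpower X q * a p X)) with (Rpower X q * (Cp * a p X)) by ring.
      apply Rmult_le_compat_l; lra. }
    assert (E3 : Cp * (Rpower X q * a p X) <= Cp * (Ch * (Rpower X p * a q X))) by (apply Rmult_le_compat_l; lra).
    assert (E4 : Rpower X p * A q (n - 1) + Rpower X q * A p (n - 1) <= (Cq + Cp * Ch) * (Rpower X p * a q X)) by nra.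
    eapply Rle_trans; [exact HTU|]. rewrite Rmult_assoc. apply Rmult_le_compat_l; lra.
Qed.

Lemma K2 p q : exists c C, 0 < c /\ 0 < C /\ forall n, (2 <= n)%nat ->
  c * G p q (INR n) <= T p q n <= C * G p q (INR n).
Proof.
  destruct (Rle_or_lt q p) as [H|H].
  - apply K2le; exact H.
  - destruct (K2le q p ltac:(lra)) as [c [C [Hc [HC HK]]]].
    exists c, C. split; [exact Hc|]. split; [exact HC|]. intros n Hn.
    rewrite T_sym, G_sym. apply HK; exact Hn.
Qed.

Lemma order_eq r p q n : (1 <= n)%nat ->
  order_fn r p q n = Rpower (INR n) ((r - 1) * p) * G p q (INR n).
Proof.
  intros Hn. unfold order_fn, G.
  destruct (Rlt_dec (-1) (Rmin p q)); [|destruct (Req_EM_T (Rmin p q) (-1))].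
  - rewrite <- Rpower_plus. f_equal. ring.
  - rewrite <- Rmult_assoc, <- Rpower_plus. f_equal. f_equal. ring.
  - rewrite <- Rpower_plus. f_equal. unfold Rmax.
    destruct (Rle_dec (r * p) ((r - 1) * p + q)); destruct (Rle_dec p q); lra.
Qed.

Lemma one_minus_pow r t : 0 < r -> 0 < t < 1 ->
  Rmin 1 r * (1 - t) <= 1 - Rpower t r <= Rmax 1 r * (1 - t).
Proof.
  intros Hr Ht. assert (Hlt : ln t < 0) by (rewrite <- ln_1; apply ln_increasing; lra).
  destruct (Rle_or_lt r 1) as [H|H].
  - rewrite Rmin_right, Rmax_left by lra.
    pose proof (bern1 r t ltac:(lra) ltac:(lra)).
    assert (t <= Rpower t r).
    { rewrite <- (Rpower_1 t) at 1 by lra. unfold Rpower. apply exp_le'. nra. }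
    lra.
  - rewrite Rmin_left, Rmax_right by lra.
    pose proof (bern2a r t ltac:(lra) ltac:(lra)).
    assert (Rpower t r <= t).
    { rewrite <- (Rpower_1 t) at 2 by lra. unfold Rpower. apply exp_le'. nra. }
    lra.
Qed.

Lemma diffbound r X Y : 0 < r -> 0 < Y -> Y < X ->
  Rmin 1 r * (Rpower X (r - 1) * (X - Y)) <= Rpower X r - Rpower Y r <=
  Rmax 1 r * (Rpower X (r - 1) * (X - Y)).
Proof.
  intros Hr HY HXY. set (t := Y / X).
  assert (Ht : 0 < t < 1).
  { unfold t. split. apply Rdiv_lt_0_compat; lra.
    apply Rmult_lt_reg_r with X; [lra|]. unfold Rdiv. rewrite Rmult_assoc, Rinv_l; lra. }
  assert (EY : Y = t * X) by (unfold t; field; lra).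
  rewrite EY, Rpower_mul, Rpower_sub1 by lra.
  replace (Rpower X r / X * (X - t * X)) with (Rpower X r * (1 - t)) by (field; lra).
  pose proof (one_minus_pow r t Hr Ht). pose proof (Rpower_pos' X r). nra.
Qed.

Lemma minmax_scale u v Z : 0 < Z ->
  Rmin u v * Z <= Rmin (u * Z) (v * Z) /\ Rmax (u * Z) (v * Z) <= Rmax u v * Z.
Proof.
  intros HZ. split.
  - apply Rmin_glb; apply Rmult_le_compat_r; try lra; [apply Rmin_l|apply Rmin_r].
  - apply Rmax_lub; apply Rmult_le_compat_r; try lra; [apply Rmax_l|apply Rmax_r].
Qed.

Lemma K1 r p q : 0 < r -> exists c0 C0, 0 < c0 /\ 0 < C0 /\ forall n k, (1 <= k)%nat -> (k < n)%nat ->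
  c0 * (Rpower (INR n) ((r - 1) * p) * (Rpower (INR (n - k)) p * Rpower (INR k) q)) <= term r p q n k <=
  C0 * (Rpower (INR n) ((r - 1) * p) * (Rpower (INR (n - k)) p * Rpower (INR k) q)).
Proof.
  intros Hr. set (m1 := Rmin 1 r). set (M1 := Rmax 1 r).
  assert (Hm1 : 0 < m1) by (unfold m1; apply Rmin_glb_lt; lra).
  assert (HM1 : m1 <= M1) by (unfold m1, M1; eapply Rle_trans; [apply Rmin_l|apply Rmax_l]).
  exists (Rmin (Rpower m1 p) (Rpower M1 p)), (Rmax (Rpower m1 p) (Rpower M1 p)).
  split; [apply Rmin_glb_lt; apply Rpower_pos'|].
  split; [eapply Rlt_le_trans; [|apply Rmax_l]; apply Rpower_pos'|].
  intros n k Hk Hkn. set (X := INR n). set (Y := INR k).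
  assert (HY : 1 <= Y) by (apply INR_ge1; auto). assert (HXY : Y < X) by (apply lt_INR; auto).
  rewrite minus_INR by lia. fold X Y.
  set (Z := Rpower X (r - 1) * (X - Y)).
  assert (HZ : 0 < Z) by (unfold Z; apply Rmult_lt_0_compat; [apply Rpower_pos'|lra]).
  assert (EZ : Rpower Z p = Rpower X ((r - 1) * p) * Rpower (X - Y) p).
  { unfold Z. rewrite Rpower_mul, Rpower_mult by (try apply Rpower_pos'; lra). reflexivity. }
  pose proof (diffbound r X Y Hr ltac:(lra) HXY) as [D1 D2]. fold m1 M1 Z in D1, D2.
  destruct (powbound (m1 * Z) (Rpower X r - Rpower Y r) (M1 * Z) p ltac:(nra) D1 D2) as [P1 P2].
  rewrite !Rpower_mul in P1, P2 by lra.
  destruct (minmax_scale (Rpower m1 p) (Rpower M1 p) (Rpower Z p) (Rpower_pos' _ _)) as [Q1 Q2].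
  rewrite EZ in Q1, Q2. unfold term. fold X Y. pose proof (Rpower_pos' Y q).
  rewrite EZ in P1, P2.
  set (W := Rpower X ((r - 1) * p) * Rpower (X - Y) p) in *.
  replace (Rpower X ((r - 1) * p) * (Rpower (X - Y) p * Rpower Y q)) with (W * Rpower Y q) by (unfold W; ring).
  rewrite <- !Rmult_assoc.
  split; apply Rmult_le_compat_r; lra.
Qed.

Lemma S_sumk r p q n : (2 <= n)%nat -> S r p q n = sumk (term r p q n) (n - 1).
Proof.
  intros Hn. unfold S. rewrite sum_f_R0_sumk. f_equal. lia.
Qed.

Theorem lemma5 (r p q : R) (hr : 0 < r) :
  exists (c C : R) (N : nat), 0 < c /\ 0 < C /\
    forall n : nat, (2 <= n)%nat -> (N <= n)%nat ->
      c * order_fn r p q n <= S r p q n <= C * order_fn r p q n.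
Proof.
  destruct (K1 r p q hr) as [c0 [C0 [Hc0 [HC0 HK1]]]].
  destruct (K2 p q) as [c [C [Hc [HC HK2]]]].
  exists (c0 * c), (C0 * C), 2%nat. split; [apply Rmult_lt_0_compat; lra|].
  split; [apply Rmult_lt_0_compat; lra|].
  intros n Hn _. rewrite order_eq by lia. rewrite S_sumk by auto.
  set (e := Rpower (INR n) ((r - 1) * p)). assert (He : 0 < e) by apply Rpower_pos'.
  destruct (HK2 n Hn) as [T1 T2].
  assert (E1 : sumk (fun k => c0 * (e * (Rpower (INR (n - k)) p * Rpower (INR k) q))) (n - 1) = c0 * (e * T p q n)).
  { unfold T. rewrite (sumk_scal c0 (fun k => e * (Rpower (INR (n - k)) p * Rpower (INR k) q))).
    rewrite (sumk_scal e (fun k => Rpower (INR (n - k)) p * Rpower (INR k) q)). reflexivity. }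
  assert (E2 : sumk (fun k => C0 * (e * (Rpower (INR (n - k)) p * Rpower (INR k) q))) (n - 1) = C0 * (e * T p q n)).
  { unfold T. rewrite (sumk_scal C0 (fun k => e * (Rpower (INR (n - k)) p * Rpower (INR k) q))).
    rewrite (sumk_scal e (fun k => Rpower (INR (n - k)) p * Rpower (INR k) q)). reflexivity. }
  assert (L : c0 * (e * T p q n) <= sumk (term r p q n) (n - 1)).
  { rewrite <- E1. apply sumk_le. intros k Hk. apply HK1; lia. }
  assert (U : sumk (term r p q n) (n - 1) <= C0 * (e * T p q n)).
  { rewrite <- E2. apply sumk_le. intros k Hk. apply HK1; lia. }
  set (g := G p q (INR n)) in *. set (t := T p q n) in *.
  split.
  - eapply Rle_trans; [|exact L].
    replace (c0 * c * (e * g)) with (c0 * (e * (c * g))) by ring.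
    apply Rmult_le_compat_l; [lra|]. apply Rmult_le_compat_l; lra.
  - eapply Rle_trans; [exact U|].
    replace (C0 * C * (e * g)) with (C0 * (e * (C * g))) by ring.
    apply Rmult_le_compat_l; [lra|]. apply Rmult_le_compat_l; lra.
Qed.
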